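(* Let $0\le\alpha<1$ and let $r_0=r_0(\alpha)$ be the real root in $(0,1)$ of the equation \[2(1-\alpha)(1-r)^4=1-\alpha+4r+(1+\alpha)r^2.\] Let $\mathcal{F}$ be the class of analytic functions $f(z)=z+\sum_{n\ge2}a_nz^n$ on $\mathbb{D}$ with $|a_n|\le n$ for all $n\ge2$. Then every $f\in\mathcal{F}$ satisfies $\left|\frac{zf''(z)}{f'(z)}\right|\le1-\alpha$ for $|z|\le r_0$; $r_0(\alpha)$ is the radius of convexity of order $\alpha$ of $\mathcal{F}$; and $r_0(1/2)\approx0.064723$ is the radius of uniform convexity of $\mathcal{F}$. All results are sharp (in particular $r_0$ in the first statement cannot be replaced by any larger number).
   Context: $\mathbb{D}=\{z\in\mathbb{C}:|z|<1\}$. For a class $\mathcal{F}$ of analytic functions on $\mathbb{D}$ normalized by $f(0)=0$, $f'(0)=1$, and $0\le\alpha<1$, the radius of convexity of order $\alpha$ of $\mathcal{F}$ is the supremum of $r\in(0,1]$ such that every $f\in\mathcal{F}$ satisfies $f'(z)\ne0$ and $\operatorname{Re}\big(1+zf''(z)/f'(z)\big)>\alpha$ for $|z|<r$. The radius of uniform convexity of $\mathcal{F}$ is the supremum of $r\in(0,1]$ such that every $f\in\mathcal{F}$ satisfies $f'(z)\ne0$ and $\operatorname{Re}\big(1+zf''(z)/f'(z)\big)>\left|zf''(z)/f'(z)\right|$ for $|z|<r$. *)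

(* Defs.v *)
From Stdlib Require Import Reals.
From Coquelicot Require Import Coquelicot.
Open Scope R_scope.

Definition r0_eq (alpha r : R) : Prop :=
  2 * (1 - alpha) * (1 - r) ^ 4 = 1 - alpha + 4 * r + (1 + alpha) * r ^ 2.

Definition inF (f : C -> C) : Prop :=
  exists a : nat -> C,
    a 0%nat = RtoC 0 /\ a 1%nat = RtoC 1 /\
    (forall n : nat, (2 <= n)%nat -> Cmod (a n) <= INR n) /\
    (forall z : C, Cmod z < 1 ->
       @is_series C_AbsRing C_NormedModule (fun n => Cmult (a n) (Cpow z n)) (f z)).

Definition derivs (f f1 f2 : C -> C) : Prop :=
  forall z : C, Cmod z < 1 ->
    @is_derive C_AbsRing C_NormedModule f z (f1 z) /\
    @is_derive C_AbsRing C_NormedModule f1 z (f2 z).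

Definition bound_on_closed_disk (alpha r : R) : Prop :=
  forall f f1 f2 : C -> C, inF f -> derivs f f1 f2 ->
  forall z : C, Cmod z < 1 -> Cmod z <= r ->
    f1 z <> RtoC 0 /\ Cmod (Cdiv (Cmult z (f2 z)) (f1 z)) <= 1 - alpha.

Definition convex_order_in (alpha r : R) : Prop :=
  forall f f1 f2 : C -> C, inF f -> derivs f f1 f2 ->
  forall z : C, Cmod z < r ->
    f1 z <> RtoC 0 /\ Re (Cplus (RtoC 1) (Cdiv (Cmult z (f2 z)) (f1 z))) > alpha.

Definition unif_convex_in (r : R) : Prop :=
  forall f f1 f2 : C -> C, inF f -> derivs f f1 f2 ->
  forall z : C, Cmod z < r ->
    f1 z <> RtoC 0 /\
    Re (Cplus (RtoC 1) (Cdiv (Cmult z (f2 z)) (f1 z)))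
      > Cmod (Cdiv (Cmult z (f2 z)) (f1 z)).

Definition radius_convexity_order (alpha rho : R) : Prop :=
  is_lub (fun r => 0 < r <= 1 /\ convex_order_in alpha r) rho.

Definition radius_uniform_convexity (rho : R) : Prop :=
  is_lub (fun r => 0 < r <= 1 /\ unif_convex_in r) rho.

(* Main.v *)
Require Import Defs.
From Stdlib Require Import Reals Lra Lia Psatz ClassicalEpsilon.
From Coquelicot Require Import Coquelicot.
Open Scope R_scope.


Lemma lim_inv_S : is_lim_seq (fun n => / INR (S n)) 0.
Proof.
  pose proof (is_lim_seq_INR) as H. apply is_lim_seq_incr_1 in H.
  pose proof (is_lim_seq_inv _ _ H) as H2. simpl in H2. apply H2. discriminate.
Qed.

Lemma exs4_pos (r : R) : 0 < r < 1 -> ex_series (fun n => INR (S n) ^ 4 * r ^ n).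
Proof.
  intros Hr.
  apply ex_series_ext with (fun n => Rabs (INR (S n) ^ 4 * r ^ n)).
  { intro n. apply Rabs_pos_eq. apply Rmult_le_pos. apply pow_le. apply pos_INR.
    apply pow_le; lra. }
  apply ex_series_DAlembert with r. lra.
  { intro n. apply Rmult_integral_contrapositive_currified. apply pow_nonzero.
    apply not_0_INR; lia. apply pow_nonzero; lra. }
  apply is_lim_seq_ext with (fun n => (1 + / INR (S n)) * (1 + / INR (S n)) *
     (1 + / INR (S n)) * (1 + / INR (S n)) * r).
  { intro n. assert (HS : INR (S n) <> 0) by (apply not_0_INR; lia).
    assert (Hp : r ^ n <> 0) by (apply pow_nonzero; lra).
    rewrite Rabs_pos_eq.
    rewrite (S_INR (S n)). change (r ^ S n) with (r * r ^ n). set (x := INR (S n)) in *. field. split; auto.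
    apply Rmult_le_pos. apply Rmult_le_pos. apply pow_le. apply pos_INR.
    apply pow_le; lra. apply Rlt_le, Rinv_0_lt_compat. apply Rmult_lt_0_compat.
    apply pow_lt. apply lt_0_INR; lia. apply pow_lt; lra. }
  assert (H1 : is_lim_seq (fun n => 1 + / INR (S n)) (1 + 0)).
  { apply is_lim_seq_plus'. apply is_lim_seq_const.
    apply lim_inv_S. }
  rewrite Rplus_0_r in H1.
  assert (H2 : is_lim_seq (fun n => (1 + / INR (S n)) * (1 + / INR (S n)) *
     (1 + / INR (S n)) * (1 + / INR (S n)) * r) (1*1*1*1*r)).
  { repeat apply is_lim_seq_mult'; auto. apply is_lim_seq_const. }
  replace (1*1*1*1*r) with r in H2 by ring. exact H2.
Qed.

Lemma exs4 (r : R) : 0 <= r < 1 -> ex_series (fun n => INR (S n) ^ 4 * r ^ n).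
Proof.
  intros Hr. set (s := (1 + r) / 2).
  assert (Hs : 0 < s < 1) by (unfold s; lra).
  apply (@ex_series_le R_AbsRing R_CompleteNormedModule _ (fun n => INR (S n) ^ 4 * s ^ n)).
  2: apply exs4_pos; auto.
  intro n. change (norm (INR (S n) ^ 4 * r ^ n)) with (Rabs (INR (S n) ^ 4 * r ^ n)).
  rewrite Rabs_pos_eq. apply Rmult_le_compat_l. apply pow_le, pos_INR.
  apply pow_incr. unfold s; lra.
  apply Rmult_le_pos. apply pow_le, pos_INR. apply pow_le; lra.
Qed.

Notation CSer u L := (@is_series C_AbsRing C_NormedModule u L).

Lemma sum_n_Cmod (u : nat -> C) (v : nat -> R) :
  (forall n, Cmod (u n) <= v n) -> forall N, Cmod (sum_n u N) <= sum_n v N.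
Proof.
  intros H N. induction N.
  - rewrite !sum_O. apply H.
  - rewrite !sum_Sn. eapply Rle_trans. apply Cmod_triangle.
    change (plus (sum_n v N) (v (S N))) with (sum_n v N + v (S N)).
    apply Rplus_le_compat; auto.
Qed.

Lemma Cser_bound (u : nat -> C) (v : nat -> R) L M :
  CSer u L -> is_series v M -> (forall n, Cmod (u n) <= v n) -> Cmod L <= M.
Proof.
  intros HL HM Hb.
  assert (H1 : is_lim_seq (fun N => Cmod (sum_n u N)) (Cmod L)).
  { unfold is_lim_seq. simpl.
    exact (filterlim_comp _ _ _ (sum_n u) norm _ _ _ HL (@filterlim_norm C_AbsRing C_NormedModule L)). }
  assert (H2 : is_lim_seq (sum_n v) M) by exact HM.
  pose proof (is_lim_seq_le _ _ _ _ (sum_n_Cmod u v Hb) H1 H2) as H3. exact H3.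
Qed.

Lemma sum_n_RtoC (v : nat -> R) N : sum_n (fun n => RtoC (v n)) N = RtoC (sum_n v N).
Proof.
  induction N.
  - rewrite !sum_O. reflexivity.
  - rewrite !sum_Sn. rewrite IHN. change (plus (sum_n v N) (v (S N))) with (sum_n v N + v (S N)).
    change (plus (RtoC (sum_n v N)) (RtoC (v (S N)))) with (Cplus (RtoC (sum_n v N)) (RtoC (v (S N)))).
    rewrite RtoC_plus. reflexivity.
Qed.

Lemma RtoC_series (v : nat -> R) M : is_series v M -> CSer (fun n => RtoC (v n)) (RtoC M).
Proof.
  intros H. unfold is_series in *.
  apply filterlim_locally_ball_norm. intro eps.
  pose proof (proj1 (filterlim_locally_ball_norm _ _) H eps) as H1.
  eapply filter_imp. 2: exact H1. intros N HN. simpl in HN.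
  unfold ball_norm in *. rewrite sum_n_RtoC.
  change (Cmod (Cminus (RtoC (sum_n v N)) (RtoC M)) < eps).
  rewrite <- RtoC_minus, Cmod_R. exact HN.
Qed.

Definition Epol (w z : C) (n : nat) : C :=
  Cminus (Cminus (Cpow w n) (Cpow z n))
         (Cmult (Cmult (RtoC (INR n)) (Cminus w z)) (Cpow z (pred n))).

Lemma Epol_S w z n : Epol w z (S n) =
  Cplus (Cmult w (Epol w z n))
        (Cmult (Cmult (RtoC (INR n)) (Cmult (Cminus w z) (Cminus w z))) (Cpow z (pred n))).
Proof.
  unfold Epol. destruct n.
  - simpl. ring.
  - rewrite (S_INR (S n)), RtoC_plus. simpl pred. simpl Cpow. ring.
Qed.

Lemma Epol_bound w z r n : 0 < r -> Cmod w <= r -> Cmod z <= r ->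
  r^2 * Cmod (Epol w z n) <= INR n ^ 2 * Cmod (Cminus w z) ^ 2 * r ^ n.
Proof.
  intros Hr Hw Hz. induction n.
  - unfold Epol. simpl. replace (Cminus (Cminus 1 1) (Cmult (Cmult (RtoC 0) (Cminus w z)) 1)) with (RtoC 0) by ring.
    rewrite Cmod_0. lra.
  - rewrite Epol_S. set (h := Cmod (Cminus w z)) in *.
    assert (Hh : 0 <= h) by apply Cmod_ge_0.
    assert (HE : 0 <= Cmod (Epol w z n)) by apply Cmod_ge_0.
    eapply Rle_trans. apply Rmult_le_compat_l. nra. apply Cmod_triangle.
    rewrite !Cmod_mult, Cmod_R, Rabs_pos_eq by apply pos_INR. rewrite Cmod_pow.
    fold h.
    assert (Hn : 0 <= INR n) by apply pos_INR.
    assert (Hz2 : r^2 * (INR n * Cmod z ^ pred n) <= INR n * r ^ S n).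
    { destruct n. simpl. lra.
      simpl pred. replace (r ^ S (S n)) with (r^2 * r^n) by (simpl; ring).
      assert (Hq : Cmod z ^ n <= r ^ n) by (apply pow_incr; split; [apply Cmod_ge_0 | auto]).
      assert (Hq2 : 0 <= r^2 * INR (S n)) by (apply Rmult_le_pos; [nra | apply pos_INR]).
      pose proof (Rmult_le_compat_l _ _ _ Hq2 Hq) as Hq3. lra. }
    assert (H1 : r^2 * (Cmod w * Cmod (Epol w z n)) <= r * (INR n ^ 2 * h ^ 2 * r ^ n)).
    { replace (r^2 * (Cmod w * Cmod (Epol w z n))) with (Cmod w * (r^2 * Cmod (Epol w z n))) by ring.
      apply Rle_trans with (r * (r^2 * Cmod (Epol w z n))).
      apply Rmult_le_compat_r. nra. auto.
      apply Rmult_le_compat_l; lra. }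
    assert (Hrn : 0 <= r ^ n) by (apply pow_le; lra).
    rewrite S_INR. replace (r ^ S n) with (r * r ^ n) by (simpl; ring).
    replace (INR n * r ^ S n) with (INR n * (r * r ^ n)) in Hz2 by (simpl; ring).
    assert (Hhh : 0 <= h * h) by nra.
    assert (H2 : r ^ 2 * (INR n * (h * h) * Cmod z ^ pred n) <= h * h * (INR n * (r * r ^ n))).
    { replace (r ^ 2 * (INR n * (h * h) * Cmod z ^ pred n)) with (h * h * (r^2 * (INR n * Cmod z ^ pred n))) by ring.
      apply Rmult_le_compat_l; auto. }
    assert (H3 : 0 <= INR n * r * r ^ n * h * h) by (repeat apply Rmult_le_pos; auto; lra).
    assert (H4 : 0 <= (INR n + 1) * (h*h*r*r^n)) by (repeat apply Rmult_le_pos; lra).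
    rewrite Rmult_plus_distr_l.
    replace ((INR n + 1) ^ 2 * h ^ 2 * (r * r ^ n)) with (r * (INR n ^ 2 * h ^ 2 * r ^ n) + h * h * (INR n * (r * r ^ n)) + (INR n + 1) * (h*h*r*r^n)) by ring.
    lra.
Qed.

Lemma pser_derive (a : nat -> C) (F G : C -> C) :
  (forall n, Cmod (a n) <= INR (S n) ^ 2) ->
  (forall z, Cmod z < 1 -> CSer (fun n => Cmult (a n) (Cpow z n)) (F z)) ->
  (forall z, Cmod z < 1 ->
     CSer (fun n => Cmult (Cmult (RtoC (INR (S n))) (a (S n))) (Cpow z n)) (G z)) ->
  forall z, Cmod z < 1 -> @is_derive C_AbsRing C_NormedModule F z (G z).
Proof.
  intros Ha HF HG z Hz.
  pose proof (Cmod_ge_0 z) as Hz0.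
  set (r := (1 + Cmod z) / 2).
  assert (Hr : 0 < r < 1) by (unfold r; lra).
  assert (Hzr : Cmod z <= r) by (unfold r; lra).
  assert (Hr' : 0 <= r < 1) by lra.
  pose proof (Series_correct _ (exs4 r Hr')) as HS4.
  set (S4 := Series (fun n => INR (S n) ^ 4 * r ^ n)) in *.
  set (K := Rabs (S4 / r^2) + 1).
  assert (HK : 0 < K) by (unfold K; pose proof (Rabs_pos (S4 / r^2)); lra).
  assert (HK2 : S4 / r^2 <= K) by (unfold K; pose proof (Rle_abs (S4 / r^2)); lra).
  split. apply is_linear_scal_l.
  intros x Hx. apply (@is_filter_lim_locally_unique C_AbsRing (AbsRing_NormedModule C_AbsRing)) in Hx. subst x.
  intro eps.
  set (d := Rmin ((1 - Cmod z) / 2) (eps / K)).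
  assert (Hd : 0 < d).
  { unfold d. apply Rmin_pos. lra. apply Rdiv_lt_0_compat. apply cond_pos. auto. }
  apply filter_imp with (@ball_norm C_AbsRing (AbsRing_NormedModule C_AbsRing) z (mkposreal d Hd)). 2: apply (@locally_ball_norm C_AbsRing (AbsRing_NormedModule C_AbsRing)).
  intros w Hw. unfold ball_norm in Hw. simpl in Hw.
  change (Cmod (Cminus w z) < d) in Hw.
  change (Cmod (Cminus (Cminus (F w) (F z)) (Cmult (Cminus w z) (G z))) <= eps * Cmod (Cminus w z)).
  set (h := Cmod (Cminus w z)) in *.
  assert (Hh0 : 0 <= h) by apply Cmod_ge_0.
  assert (Hd1 : d <= (1 - Cmod z) / 2) by apply Rmin_l.
  assert (Hd2 : d <= eps / K) by apply Rmin_r.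
  assert (Hwr : Cmod w <= r).
  { replace w with (Cplus z (Cminus w z)) by ring.
    pose proof (Cmod_triangle z (Cminus w z)). unfold r. fold h in H. lra. }
  assert (Hw1 : Cmod w < 1) by lra.
  assert (HG' : CSer (fun n => Cmult (Cmult (RtoC (INR n)) (a n)) (Cpow z (pred n))) (G z)).
  { apply is_series_decr_1.
    assert (E : @plus C_NormedModule (G z) (@opp C_NormedModule (Cmult (Cmult (RtoC (INR 0)) (a 0%nat)) (Cpow z (pred 0)))) = G z).
    { change (Cplus (G z) (Copp (Cmult (Cmult (RtoC (INR 0)) (a 0%nat)) (Cpow z (pred 0)))) = G z).
      simpl. ring. }
    rewrite E. exact (HG z Hz). }
  assert (Hser : CSer (fun n => Cmult (a n) (Epol w z n))
                      (Cminus (Cminus (F w) (F z)) (Cmult (Cminus w z) (G z)))).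
  { pose proof (is_series_minus _ _ _ _ (HF w Hw1) (HF z Hz)) as H1.
    pose proof (is_series_scal (Cminus w z) _ _ HG') as H2.
    pose proof (is_series_minus _ _ _ _ H1 H2) as H3.
    eapply is_series_ext. 2: exact H3. intro n. unfold Epol.
    change (Cminus (Cminus (Cmult (a n) (Cpow w n)) (Cmult (a n) (Cpow z n)))
             (Cmult (Cminus w z) (Cmult (Cmult (RtoC (INR n)) (a n)) (Cpow z (pred n))))
            = Cmult (a n) (Cminus (Cminus (Cpow w n) (Cpow z n))
                 (Cmult (Cmult (RtoC (INR n)) (Cminus w z)) (Cpow z (pred n))))).
    ring. }
  assert (Hrs : is_series (fun n => (h ^ 2 / r ^ 2) * (INR (S n) ^ 4 * r ^ n)) ((h ^ 2 / r ^ 2) * S4)).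
  { apply (@is_series_scal R_AbsRing R_NormedModule). exact HS4. }
  eapply Rle_trans. apply (Cser_bound _ _ _ _ Hser Hrs).
  { intro n. rewrite Cmod_mult.
    pose proof (Epol_bound w z r n (proj1 Hr) Hwr Hzr) as HE. fold h in HE.
    assert (HE' : Cmod (Epol w z n) <= INR n ^ 2 * h ^ 2 * r ^ n / r ^ 2).
    { apply Rmult_le_reg_l with (r ^ 2). nra. unfold Rdiv.
      replace (r ^ 2 * (INR n ^ 2 * h ^ 2 * r ^ n * / r ^ 2)) with (INR n ^ 2 * h ^ 2 * r ^ n) by (field; lra).
      exact HE. }
    assert (Hn : INR n ^ 2 <= INR (S n) ^ 2).
    { apply pow_incr. split. apply pos_INR. apply le_INR. lia. }
    apply Rle_trans with (INR (S n) ^ 2 * (INR n ^ 2 * h ^ 2 * r ^ n / r ^ 2)).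
    apply Rmult_le_compat; auto. apply Cmod_ge_0. apply Cmod_ge_0.
    assert (Hq : 0 <= h ^ 2 * r ^ n / r ^ 2).
    { apply Rmult_le_pos. apply Rmult_le_pos. apply pow_le; auto. apply pow_le; lra.
      apply Rlt_le, Rinv_0_lt_compat. nra. }
    assert (HSn : 0 <= INR (S n) ^ 2) by (apply pow_le, pos_INR).
    replace (INR (S n) ^ 2 * (INR n ^ 2 * h ^ 2 * r ^ n / r ^ 2)) with
      ((INR (S n) ^ 2 * INR n ^ 2) * (h ^ 2 * r ^ n / r ^ 2)) by (field; lra).
    replace (h ^ 2 / r ^ 2 * (INR (S n) ^ 4 * r ^ n)) with
      ((INR (S n) ^ 2 * INR (S n) ^ 2) * (h ^ 2 * r ^ n / r ^ 2)) by (field; lra).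
    apply Rmult_le_compat_r; auto. apply Rmult_le_compat_l; auto. }
  assert (Hhk : h * K <= eps).
  { assert (h <= eps / K) by lra.
    apply Rmult_le_reg_r with (/ K). apply Rinv_0_lt_compat; auto.
    replace (h * K * / K) with h by (field; lra). exact H. }
  replace (h ^ 2 / r ^ 2 * S4) with (h * h * (S4 / r ^ 2)) by (field; lra).
  apply Rle_trans with (h * h * K). apply Rmult_le_compat_l. nra. auto.
  replace (eps * h) with (h * eps) by ring. rewrite Rmult_assoc. apply Rmult_le_compat_l; auto.
Qed.

Lemma pk_ex k t : (k <= 4)%nat -> 0 <= t < 1 -> ex_series (fun n => INR (S n) ^ k * t ^ n).
Proof.
  intros Hk Ht.
  apply (@ex_series_le R_AbsRing R_CompleteNormedModule _ (fun n => INR (S n) ^ 4 * t ^ n)).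
  2: apply exs4; auto.
  intro n. change (norm (INR (S n) ^ k * t ^ n)) with (Rabs (INR (S n) ^ k * t ^ n)).
  assert (H1 : 1 <= INR (S n)) by (rewrite S_INR; pose proof (pos_INR n); lra).
  rewrite Rabs_pos_eq. apply Rmult_le_compat_r. apply pow_le; lra.
  apply Rle_pow; auto.
  apply Rmult_le_pos. apply pow_le; lra. apply pow_le; lra.
Qed.

Lemma shift_rel (u : nat -> R) t L D :
  is_series (fun n => u n * t ^ n) L ->
  is_series (fun n => (u (S n) - u n) * t ^ n) D ->
  (1 - t) * L = u 0%nat + t * D.
Proof.
  intros HL HD.
  assert (H1 : is_series (fun n => u (S n) * t ^ (S n)) (L - u 0%nat)).
  { apply (is_series_incr_1 (fun n => u n * t ^ n)). assert (HL' := HL).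
    replace L with ((L - u 0%nat) + (u 0%nat * t ^ 0)) in HL' by (simpl; ring).
    exact HL'. }
  assert (H2 : is_series (fun n => t * (u n * t ^ n)) (t * L)).
  { apply (@is_series_scal R_AbsRing R_NormedModule). exact HL. }
  pose proof (is_series_minus _ _ _ _ H1 H2) as H3.
  assert (H4 : is_series (fun n => t * ((u (S n) - u n) * t ^ n)) (t * D)).
  { apply (@is_series_scal R_AbsRing R_NormedModule). exact HD. }
  assert (H5 : is_series (fun n => t * ((u (S n) - u n) * t ^ n)) (L - u 0%nat - t * L)).
  { eapply is_series_ext. 2: exact H3. intro n. change (u (S n) * t ^ S n - t * (u n * t ^ n) = t * ((u (S n) - u n) * t ^ n)).
    simpl. ring. }
  pose proof (is_series_unique _ _ H4) as E1.
  pose proof (is_series_unique _ _ H5) as E2. lra.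
Qed.

Section CF.
Variable t : R.
Hypothesis Ht : 0 <= t < 1.

Definition pk k := Series (fun n => INR (S n) ^ k * t ^ n).
Lemma pk_is k : (k <= 4)%nat -> is_series (fun n => INR (S n) ^ k * t ^ n) (pk k).
Proof. intros. apply Series_correct. apply pk_ex; auto. Qed.

Lemma p0_val : pk 0 = / (1 - t).
Proof.
  apply is_series_unique. eapply is_series_ext. 2: apply is_series_geom.
  intro n. simpl. ring. rewrite Rabs_pos_eq; lra.
Qed.

Lemma lin3 c2 c1 c0 : is_series (fun n => (c2 * INR (S n) ^ 2 + c1 * INR (S n) ^ 1 + c0 * INR (S n) ^ 0) * t ^ n)
   (c2 * pk 2 + c1 * pk 1 + c0 * pk 0).
Proof.
  pose proof (@is_series_scal R_AbsRing R_NormedModule c2 _ _ (pk_is 2 ltac:(lia))) as H2.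
  pose proof (@is_series_scal R_AbsRing R_NormedModule c1 _ _ (pk_is 1 ltac:(lia))) as H1.
  pose proof (@is_series_scal R_AbsRing R_NormedModule c0 _ _ (pk_is 0 ltac:(lia))) as H0.
  pose proof (is_series_plus _ _ _ _ (is_series_plus _ _ _ _ H2 H1) H0) as H.
  eapply is_series_ext. 2: exact H. intro n.
  change (c2 * (INR (S n) ^ 2 * t ^ n) + c1 * (INR (S n) ^ 1 * t ^ n) + c0 * (INR (S n) ^ 0 * t ^ n) =
    (c2 * INR (S n) ^ 2 + c1 * INR (S n) ^ 1 + c0 * INR (S n) ^ 0) * t ^ n). ring.
Qed.

Lemma shift_k k c2 c1 c0 : (k <= 4)%nat ->
  (forall n, INR (S (S n)) ^ k - INR (S n) ^ k = c2 * INR (S n) ^ 2 + c1 * INR (S n) ^ 1 + c0 * INR (S n) ^ 0) ->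
  (1 - t) * pk k = 1 + t * (c2 * pk 2 + c1 * pk 1 + c0 * pk 0).
Proof.
  intros Hk Hd.
  assert (HD : is_series (fun n => (INR (S (S n)) ^ k - INR (S n) ^ k) * t ^ n) (c2 * pk 2 + c1 * pk 1 + c0 * pk 0)).
  { eapply is_series_ext. 2: apply lin3. intro n. rewrite Hd. reflexivity. }
  pose proof (shift_rel (fun n => INR (S n) ^ k) t _ _ (pk_is k Hk) HD) as H.
  rewrite H. simpl. rewrite pow1. ring.
Qed.

Lemma p1_val : pk 1 = / (1 - t) ^ 2.
Proof.
  assert (H := shift_k 1 0 0 1 ltac:(lia) ltac:(intro n; rewrite S_INR; simpl; ring)).
  rewrite p0_val in H. apply Rmult_eq_reg_l with (1 - t). rewrite H. field. lra. lra.
Qed.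

Lemma p2_val : pk 2 = (1 + t) / (1 - t) ^ 3.
Proof.
  assert (H := shift_k 2 0 2 1 ltac:(lia) ltac:(intro n; rewrite (S_INR (S n)); simpl; ring)).
  rewrite p0_val, p1_val in H. apply Rmult_eq_reg_l with (1 - t). rewrite H. field. lra. lra.
Qed.

Lemma p3_val : pk 3 = (1 + 4 * t + t ^ 2) / (1 - t) ^ 4.
Proof.
  assert (H := shift_k 3 3 3 1 ltac:(lia) ltac:(intro n; rewrite (S_INR (S n)); simpl; ring)).
  rewrite p0_val, p1_val, p2_val in H. apply Rmult_eq_reg_l with (1 - t). rewrite H. field. lra. lra.
Qed.

Definition Sfun := (1 + t) / (1 - t) ^ 3 - 1.
Definition Nfun := t * (4 + 2 * t) / (1 - t) ^ 4.

Lemma S_is : is_series (fun n => INR (S (S n)) ^ 2 * t ^ (S n)) Sfun.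
Proof.
  pose proof (pk_is 2 ltac:(lia)) as H. rewrite p2_val in H.
  apply (is_series_incr_1 (fun n => INR (S n) ^ 2 * t ^ n)).
  assert (H' := H). unfold Sfun.
  replace ((1 + t) / (1 - t) ^ 3) with (((1 + t) / (1 - t) ^ 3 - 1) + INR 1 ^ 2 * t ^ 0) in H' by (simpl; ring).
  exact H'.
Qed.

Lemma N_is : is_series (fun n => INR (S n) * INR (S (S n)) ^ 2 * t ^ (S n)) Nfun.
Proof.
  pose proof (pk_is 3 ltac:(lia)) as H3. pose proof (pk_is 2 ltac:(lia)) as H2.
  pose proof (is_series_minus _ _ _ _ H3 H2) as H.
  assert (H' : is_series (fun n => INR n * INR (S n) ^ 2 * t ^ n) (pk 3 - pk 2)).
  { eapply is_series_ext. 2: exact H. intro n.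
    change (INR (S n) ^ 3 * t ^ n - INR (S n) ^ 2 * t ^ n = INR n * INR (S n) ^ 2 * t ^ n).
    rewrite S_INR. ring. }
  apply (is_series_incr_1 (fun n => INR n * INR (S n) ^ 2 * t ^ n)).
  replace (pk 3 - pk 2) with (Nfun + INR 0 * INR 1 ^ 2 * t ^ 0) in H'.
  exact H'.
  rewrite p3_val, p2_val. unfold Nfun. simpl. field. lra.
Qed.
End CF.

Definition Csum (u : nat -> C) : C := epsilon (inhabits (RtoC 0)) (fun l => CSer u l).

Lemma Csum_spec u : (exists l, CSer u l) -> CSer u (Csum u).
Proof. intros H. unfold Csum. apply epsilon_spec. exact H. Qed.

Lemma CSer_unique u l1 l2 : CSer u l1 -> CSer u l2 -> l1 = l2.
Proof.
  intros H1 H2. unfold is_series in *.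
  exact (@filterlim_locally_unique nat C_AbsRing C_NormedModule eventually _ _ _ _ H1 H2).
Qed.

Lemma CSer_tail u L : CSer u L -> CSer (fun n => u (S n)) (Cminus L (u 0%nat)).
Proof.
  intros H. apply (is_series_incr_1 u).
  assert (E : @plus C_NormedModule (Cminus L (u 0%nat)) (u 0%nat) = L).
  { change (Cplus (Cminus L (u 0%nat)) (u 0%nat) = L). ring. }
  rewrite E. exact H.
Qed.

Lemma ex_pser (a : nat -> C) M : (forall n, Cmod (a n) <= M * INR (S n) ^ 4) ->
  forall z, Cmod z < 1 -> exists l, CSer (fun n => Cmult (a n) (Cpow z n)) l.
Proof.
  intros Ha z Hz.
  assert (Hex : ex_series (fun n => M * (INR (S n) ^ 4 * Cmod z ^ n))).
  { apply (@ex_series_scal R_AbsRing R_NormedModule). apply exs4.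
    split. apply Cmod_ge_0. auto. }
  pose proof (@ex_series_le C_AbsRing C_CompleteNormedModule
     (fun n => Cmult (a n) (Cpow z n)) (fun n => M * (INR (S n) ^ 4 * Cmod z ^ n))) as H.
  apply H; [|exact Hex]. intro n.
  change (Cmod (Cmult (a n) (Cpow z n)) <= M * (INR (S n) ^ 4 * Cmod z ^ n)).
  rewrite Cmod_mult, Cmod_pow.
  rewrite <- Rmult_assoc. apply Rmult_le_compat_r. apply pow_le, Cmod_ge_0. auto.
Qed.

Definition bco (a : nat -> C) n := Cmult (RtoC (INR (S n))) (a (S n)).

Lemma derivs_id (a : nat -> C) f f1 f2 M :
  (forall n, Cmod (a n) <= INR (S n) ^ 2) ->
  (forall n, Cmod (bco a n) <= INR (S n) ^ 2) ->
  (forall n, Cmod (bco (bco a) n) <= M * INR (S n) ^ 4) ->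
  (forall z, Cmod z < 1 -> CSer (fun n => Cmult (a n) (Cpow z n)) (f z)) ->
  derivs f f1 f2 ->
  forall z, Cmod z < 1 ->
    CSer (fun n => Cmult (bco a n) (Cpow z n)) (f1 z) /\
    CSer (fun n => Cmult (bco (bco a) n) (Cpow z n)) (f2 z).
Proof.
  intros Ha Hb Hc Hf Hd.
  set (G := fun z => Csum (fun n => Cmult (bco a n) (Cpow z n))).
  set (H := fun z => Csum (fun n => Cmult (bco (bco a) n) (Cpow z n))).
  assert (HG : forall z, Cmod z < 1 -> CSer (fun n => Cmult (bco a n) (Cpow z n)) (G z)).
  { intros z Hz. apply Csum_spec. apply (ex_pser _ 1). intro n.
    eapply Rle_trans. apply Hb.
    assert (1 <= INR (S n)) by (rewrite S_INR; pose proof (pos_INR n); lra).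
    replace (INR (S n) ^ 4) with (INR (S n) ^ 2 * INR (S n) ^ 2) by ring.
    assert (1 <= INR (S n) ^ 2) by nra. nra. auto. }
  assert (HH : forall z, Cmod z < 1 -> CSer (fun n => Cmult (bco (bco a) n) (Cpow z n)) (H z)).
  { intros z Hz. apply Csum_spec. apply (ex_pser _ M). auto. auto. }
  assert (D1 : forall z, Cmod z < 1 -> f1 z = G z).
  { intros z Hz. pose proof (pser_derive a f G Ha Hf HG z Hz) as E1.
    destruct (Hd z Hz) as [E2 _].
    rewrite <- (is_C_derive_unique _ _ _ E1). rewrite <- (is_C_derive_unique _ _ _ E2). reflexivity. }
  intros z Hz. split.
  - rewrite D1; auto.
  - assert (Hz1 : 0 < 1 - Cmod z) by lra.
    pose proof (pser_derive (bco a) G H Hb HG HH z Hz) as E1.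
    assert (E1' : @is_derive C_AbsRing C_NormedModule f1 z (H z)).
    { apply (is_derive_ext_loc G). 2: exact E1.
      apply filter_imp with (@ball_norm C_AbsRing (AbsRing_NormedModule C_AbsRing) z (mkposreal _ Hz1)).
      2: apply (@locally_ball_norm C_AbsRing (AbsRing_NormedModule C_AbsRing)).
      intros w Hw. unfold ball_norm in Hw. simpl in Hw.
      change (Cmod (Cminus w z) < 1 - Cmod z) in Hw.
      rewrite D1. reflexivity.
      replace w with (Cplus z (Cminus w z)) by ring.
      pose proof (Cmod_triangle z (Cminus w z)). lra. }
    destruct (Hd z Hz) as [_ E2].
    rewrite <- (is_C_derive_unique _ _ _ E2). rewrite (is_C_derive_unique _ _ _ E1'). auto.
Qed.

Lemma Cmod_RtoC_mult x y : 0 <= x -> Cmod (Cmult (RtoC x) y) = x * Cmod y.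
Proof. intros. rewrite Cmod_mult, Cmod_R, Rabs_pos_eq; auto. Qed.

Section Coef.
Variable a : nat -> C.
Hypothesis Ha0 : a 0%nat = RtoC 0.
Hypothesis Ha1 : a 1%nat = RtoC 1.
Hypothesis Han : forall n, (2 <= n)%nat -> Cmod (a n) <= INR n.

Lemma aS n : Cmod (a (S n)) <= INR (S n).
Proof. destruct n. rewrite Ha1, Cmod_1. simpl; lra. apply Han. lia. Qed.

Lemma INR_S_ge1 n : 1 <= INR (S n).
Proof. rewrite S_INR; pose proof (pos_INR n); lra. Qed.

Lemma coefA n : Cmod (a n) <= INR (S n) ^ 2.
Proof.
  destruct n. rewrite Ha0, Cmod_0. simpl; lra.
  eapply Rle_trans. apply aS. pose proof (INR_S_ge1 n).
  rewrite (S_INR (S n)). nra.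
Qed.

Lemma coefB n : Cmod (bco a n) <= INR (S n) ^ 2.
Proof.
  unfold bco. rewrite Cmod_RtoC_mult by apply pos_INR.
  pose proof (aS n). pose proof (INR_S_ge1 n). nra.
Qed.

Lemma coefC n : Cmod (bco (bco a) n) <= 4 * INR (S n) ^ 4.
Proof.
  unfold bco. rewrite Cmod_RtoC_mult by apply pos_INR.
  rewrite Cmod_RtoC_mult by apply pos_INR.
  pose proof (aS (S n)). pose proof (INR_S_ge1 n).
  pose proof (pos_INR (S (S n))).
  assert (E : INR (S (S n)) = INR (S n) + 1) by apply S_INR.
  rewrite E in *.
  assert (H3 : INR (S n) * ((INR (S n) + 1) * Cmod (a (S (S n)))) <= INR (S n) * ((INR (S n) + 1) * (INR (S n) + 1))).
  { apply Rmult_le_compat_l. lra. apply Rmult_le_compat_l. lra. auto. }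
  eapply Rle_trans. exact H3.
  set (x := INR (S n)) in *. 
  assert (x * ((x+1)*(x+1)) <= x * ((2*x)*(2*x))) by (apply Rmult_le_compat_l; nra).
  assert (x * (2*x*(2*x)) <= 4 * x^4) by nra. lra.
Qed.
End Coef.

Lemma key_bound f f1 f2 : inF f -> derivs f f1 f2 -> forall z, Cmod z < 1 ->
  1 - Sfun (Cmod z) <= Cmod (f1 z) /\ Cmod (Cmult z (f2 z)) <= Nfun (Cmod z).
Proof.
  intros [a [Ha0 [Ha1 [Han Hser]]]] Hd z Hz.
  set (t := Cmod z).
  assert (Ht : 0 <= t < 1) by (split; [apply Cmod_ge_0 | auto]).
  destruct (derivs_id a f f1 f2 4 (coefA a Ha0 Ha1 Han) (coefB a Ha1 Han) (coefC a Ha1 Han) Hser Hd z Hz) as [H1 H2].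
  split.
  - pose proof (CSer_tail _ _ H1) as T1.
    assert (E : Cmult (bco a 0%nat) (Cpow z 0) = RtoC 1).
    { unfold bco. rewrite Ha1. simpl. ring. }
    cbv beta in T1. rewrite E in T1.
    pose proof (Cser_bound _ _ _ _ T1 (S_is t Ht)) as HB.
    assert (HB' : Cmod (Cminus (f1 z) (RtoC 1)) <= Sfun t).
    { apply HB. intro n. rewrite Cmod_mult. unfold bco. rewrite Cmod_RtoC_mult by apply pos_INR.
      rewrite Cmod_pow. fold t. pose proof (aS a Ha1 Han (S n)).
      assert (0 <= t ^ S n) by (apply pow_le; lra).
      pose proof (pos_INR (S (S n))).
      assert (INR (S (S n)) * Cmod (a (S (S n))) <= INR (S (S n)) ^ 2) by (replace (INR (S (S n)) ^ 2) with (INR (S (S n)) * INR (S (S n))) by ring; apply Rmult_le_compat_l; auto).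
      apply Rmult_le_compat_r; auto. }
    assert (Etr : f1 z = Cplus (RtoC 1) (Cminus (f1 z) (RtoC 1))) by ring.
    pose proof (Cmod_triangle (Cminus (RtoC 1) (f1 z)) (f1 z)) as Htr.
    replace (Cplus (Cminus (RtoC 1) (f1 z)) (f1 z)) with (RtoC 1) in Htr by ring.
    rewrite Cmod_1 in Htr.
    replace (Cminus (RtoC 1) (f1 z)) with (Copp (Cminus (f1 z) (RtoC 1))) in Htr by ring.
    rewrite Cmod_opp in Htr. lra.
  - pose proof (@is_series_scal C_AbsRing C_NormedModule z _ _ H2) as T2.
    apply (Cser_bound _ _ _ _ T2 (N_is t Ht)).
    intro n. change (Cmod (Cmult z (Cmult (bco (bco a) n) (Cpow z n))) <= INR (S n) * INR (S (S n)) ^ 2 * t ^ S n).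
    rewrite !Cmod_mult. unfold bco. rewrite !Cmod_RtoC_mult by apply pos_INR.
    rewrite Cmod_pow. fold t. pose proof (aS a Ha1 Han (S n)).
    assert (0 <= t ^ n) by (apply pow_le; lra).
    pose proof (pos_INR (S (S n))). pose proof (pos_INR (S n)).
    assert (Hq : INR (S n) * (INR (S (S n)) * Cmod (a (S (S n)))) <= INR (S n) * INR (S (S n)) ^ 2).
    { apply Rmult_le_compat_l; auto. replace (INR (S (S n)) ^ 2) with (INR (S (S n)) * INR (S (S n))) by ring; apply Rmult_le_compat_l; auto. }
    replace (t ^ S n) with (t * t ^ n) by reflexivity.
    assert (0 <= t * t ^ n) by nra.
    replace (t * (INR (S n) * (INR (S (S n)) * Cmod (a (S (S n)))) * t ^ n)) with
      ((INR (S n) * (INR (S (S n)) * Cmod (a (S (S n))))) * (t * t ^ n)) by ring.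
    replace (INR (S n) * INR (S (S n)) ^ 2 * (t * t ^ n)) with ((INR (S n) * INR (S (S n)) ^ 2) * (t * t ^ n)) by ring.
    apply Rmult_le_compat_r; auto.
Qed.

Definition a_ext (n : nat) : C :=
  match n with 0%nat => RtoC 0 | 1%nat => RtoC 1 | _ => RtoC (- INR n) end.
Definition fext z := Csum (fun n => Cmult (a_ext n) (Cpow z n)).
Definition f1e z := Csum (fun n => Cmult (bco a_ext n) (Cpow z n)).
Definition f2e z := Csum (fun n => Cmult (bco (bco a_ext) n) (Cpow z n)).

Lemma a_ext_bound n : (2 <= n)%nat -> Cmod (a_ext n) <= INR n.
Proof.
  intros Hn. destruct n as [|[|m]]; try lia. unfold a_ext.
  rewrite Cmod_R, Rabs_Ropp, Rabs_pos_eq. lra. apply pos_INR.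
Qed.

Lemma le24 n x : x <= INR (S n) ^ 2 -> x <= 1 * INR (S n) ^ 4.
Proof.
  intros H. pose proof (INR_S_ge1 n).
  assert (INR (S n) ^ 2 <= INR (S n) ^ 4) by (apply Rle_pow; auto).
  lra.
Qed.

Lemma ext_HF : forall z, Cmod z < 1 -> CSer (fun n => Cmult (a_ext n) (Cpow z n)) (fext z).
Proof.
  intros z Hz. apply Csum_spec. apply (ex_pser _ 1); auto.
  intro n. apply le24. apply coefA; auto. apply a_ext_bound.
Qed.

Lemma ext_HG : forall z, Cmod z < 1 -> CSer (fun n => Cmult (bco a_ext n) (Cpow z n)) (f1e z).
Proof.
  intros z Hz. apply Csum_spec. apply (ex_pser _ 1); auto.
  intro n. apply le24. apply coefB; auto. apply a_ext_bound.
Qed.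

Lemma ext_HH : forall z, Cmod z < 1 -> CSer (fun n => Cmult (bco (bco a_ext) n) (Cpow z n)) (f2e z).
Proof.
  intros z Hz. apply Csum_spec. apply (ex_pser _ 4); auto.
  intro n. apply coefC; auto. apply a_ext_bound.
Qed.

Lemma ext_inF : inF fext.
Proof.
  exists a_ext. split. reflexivity. split. reflexivity. split.
  apply a_ext_bound. apply ext_HF.
Qed.

Lemma ext_derivs : derivs fext f1e f2e.
Proof.
  intros z Hz. split.
  - apply (pser_derive a_ext fext f1e). intro n; apply coefA; auto. apply a_ext_bound.
    apply ext_HF. apply ext_HG. auto.
  - apply (pser_derive (bco a_ext) f1e f2e). intro n; apply coefB; auto. apply a_ext_bound.
    apply ext_HG. apply ext_HH. auto.
Qed.

Lemma RtoC_pow t n : Cpow (RtoC t) n = RtoC (t ^ n).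
Proof. induction n. reflexivity. simpl. rewrite IHn, RtoC_mult. reflexivity. Qed.

Lemma f1e_val t : 0 <= t < 1 -> f1e (RtoC t) = RtoC (1 - Sfun t).
Proof.
  intros Ht.
  assert (Hz : Cmod (RtoC t) < 1) by (rewrite Cmod_R, Rabs_pos_eq; lra).
  pose proof (CSer_tail _ _ (ext_HG _ Hz)) as T. cbv beta in T.
  assert (E : Cmult (bco a_ext 0%nat) (Cpow (RtoC t) 0) = RtoC 1).
  { unfold bco. simpl. ring. }
  rewrite E in T.
  pose proof (RtoC_series _ _ (is_series_opp _ _ (S_is t Ht))) as T'.
  assert (T'' : CSer (fun n => Cmult (bco a_ext (S n)) (Cpow (RtoC t) (S n))) (RtoC (- Sfun t))).
  { eapply is_series_ext. 2: exact T'. intro n. cbv beta.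
    change (opp (INR (S (S n)) ^ 2 * t ^ S n)) with (- (INR (S (S n)) ^ 2 * t ^ S n)).
    rewrite RtoC_pow. unfold bco. change (a_ext (S (S n))) with (RtoC (- INR (S (S n)))).
    rewrite <- !RtoC_mult. f_equal. ring. }
  pose proof (CSer_unique _ _ _ T T'') as EE.
  replace (f1e (RtoC t)) with (Cplus (Cminus (f1e (RtoC t)) (RtoC 1)) (RtoC 1)) by ring.
  rewrite EE. rewrite <- RtoC_plus. f_equal. ring.
Qed.

Lemma f2e_val t : 0 <= t < 1 -> Cmult (RtoC t) (f2e (RtoC t)) = RtoC (- Nfun t).
Proof.
  intros Ht.
  assert (Hz : Cmod (RtoC t) < 1) by (rewrite Cmod_R, Rabs_pos_eq; lra).
  pose proof (@is_series_scal C_AbsRing C_NormedModule (RtoC t) _ _ (ext_HH _ Hz)) as T.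
  pose proof (RtoC_series _ _ (is_series_opp _ _ (N_is t Ht))) as T'.
  assert (T'' : CSer (fun n => scal (RtoC t) (Cmult (bco (bco a_ext) n) (Cpow (RtoC t) n))) (RtoC (- Nfun t))).
  { eapply is_series_ext. 2: exact T'. intro n. cbv beta.
    change (opp (INR (S n) * INR (S (S n)) ^ 2 * t ^ S n)) with (- (INR (S n) * INR (S (S n)) ^ 2 * t ^ S n)).
    change (scal (RtoC t) (Cmult (bco (bco a_ext) n) (Cpow (RtoC t) n))) with
       (Cmult (RtoC t) (Cmult (bco (bco a_ext) n) (Cpow (RtoC t) n))).
    rewrite RtoC_pow. unfold bco. change (a_ext (S (S n))) with (RtoC (- INR (S (S n)))).
    rewrite <- !RtoC_mult. f_equal. change (t ^ S n) with (t * t ^ n). ring. }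
  exact (CSer_unique _ _ _ T T'').
Qed.

Definition hfun (al t : R) := 2 * (1 - al) * (1 - t) ^ 4 - (1 - al + 4 * t + (1 + al) * t ^ 2).
Definition Qf (t : R) := 2 * (1 - t) ^ 4 - (1 + t) * (1 - t).

Lemma heq al r : r0_eq al r <-> hfun al r = 0.
Proof. unfold r0_eq, hfun. split; intros; lra. Qed.

Lemma hdec al s t : 0 <= al < 1 -> 0 <= s < t -> t <= 1 -> hfun al t < hfun al s.
Proof.
  intros Ha Hs Ht. unfold hfun.
  assert (H1 : (1 - t) ^ 4 <= (1 - s) ^ 4) by (apply pow_incr; lra).
  assert (H2 : t ^ 2 >= s ^ 2) by (apply Rle_ge, pow_incr; lra).
  assert (H3 : 2 * (1 - al) * (1 - t) ^ 4 <= 2 * (1 - al) * (1 - s) ^ 4) by (apply Rmult_le_compat_l; lra).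
  assert (H4 : (1 + al) * s ^ 2 <= (1 + al) * t ^ 2) by (apply Rmult_le_compat_l; lra).
  lra.
Qed.

Lemma DQ t : 0 <= t < 1 -> 1 - Sfun t = Qf t / (1 - t) ^ 4.
Proof. intros. unfold Sfun, Qf. field. lra. Qed.

Lemma rel1 al t : 0 <= t < 1 -> (1 - al) * (1 - Sfun t) - Nfun t = hfun al t / (1 - t) ^ 4.
Proof. intros. unfold Sfun, Nfun, hfun. field. lra. Qed.

Lemma Q_pos_h al t : 0 <= al < 1 -> 0 <= t < 1 -> 0 <= hfun al t -> 0 < Qf t.
Proof.
  intros Ha Ht Hh. unfold hfun in Hh. unfold Qf.
  assert (H1 : 0 <= 4 * t + (1 + al) * t ^ 2) by (pose proof (pow2_ge_0 t); nra).
  assert (H2 : 1 <= 2 * (1 - t) ^ 4).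
  { apply Rmult_le_reg_l with (1 - al). lra. nra. }
  destruct (Req_dec t 0) as [E|E]. subst t. simpl. lra.
  assert (0 < t * t) by (apply Rmult_lt_0_compat; lra). nra.
Qed.

Lemma Q_pos_small t : 0 <= t <= 12 / 100 -> 0 < Qf t.
Proof.
  intros Ht. unfold Qf.
  assert (H1 : (88 / 100) ^ 4 <= (1 - t) ^ 4) by (apply pow_incr; lra).
  assert (t * t <= 1) by nra. nra.
Qed.

Lemma Nfun_ge0 t : 0 <= t < 1 -> 0 <= Nfun t.
Proof.
  intros Ht. unfold Nfun. apply Rmult_le_pos. nra.
  apply Rlt_le, Rinv_0_lt_compat, pow_lt. lra.
Qed.

Lemma D_pos t : 0 <= t < 1 -> 0 < Qf t -> 0 < 1 - Sfun t.
Proof.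
  intros Ht HQ. rewrite DQ; auto. apply Rdiv_lt_0_compat; auto. apply pow_lt; lra.
Qed.

Lemma pos_bound al f f1 f2 : 0 <= al < 1 -> inF f -> derivs f f1 f2 ->
  forall z, Cmod z < 1 -> 0 <= hfun al (Cmod z) ->
    f1 z <> RtoC 0 /\
    Cmod (Cdiv (Cmult z (f2 z)) (f1 z)) <= Nfun (Cmod z) / (1 - Sfun (Cmod z)) /\
    0 < 1 - Sfun (Cmod z) /\
    Nfun (Cmod z) <= (1 - al) * (1 - Sfun (Cmod z)) /\
    (0 < hfun al (Cmod z) -> Nfun (Cmod z) < (1 - al) * (1 - Sfun (Cmod z))).
Proof.
  intros Ha Hf Hd z Hz Hh.
  set (t := Cmod z) in *.
  assert (Ht : 0 <= t < 1) by (split; [apply Cmod_ge_0 | auto]).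
  destruct (key_bound f f1 f2 Hf Hd z Hz) as [B1 B2]. fold t in B1, B2.
  pose proof (D_pos t Ht (Q_pos_h al t Ha Ht Hh)) as HD.
  assert (Hf1 : f1 z <> RtoC 0).
  { intro E. rewrite E, Cmod_0 in B1. lra. }
  pose proof (rel1 al t Ht) as R1.
  assert (Hp4 : 0 < (1 - t) ^ 4) by (apply pow_lt; lra).
  split; auto. split.
  - rewrite Cmod_div; auto. unfold Rdiv.
    apply Rle_trans with (Nfun t * / Cmod (f1 z)).
    apply Rmult_le_compat_r; auto. apply Rlt_le, Rinv_0_lt_compat. lra.
    apply Rmult_le_compat_l. apply Nfun_ge0; auto.
    apply Rinv_le_contravar; auto.
  - split; auto. split.
    + assert (0 <= hfun al t / (1 - t) ^ 4) by (apply Rmult_le_pos; auto; apply Rlt_le, Rinv_0_lt_compat; auto).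
      lra.
    + intros Hh'. assert (0 < hfun al t / (1 - t) ^ 4) by (apply Rdiv_lt_0_compat; auto). lra.
Qed.

Lemma ext_w t : 0 <= t < 1 -> 0 < Qf t ->
  f1e (RtoC t) <> RtoC 0 /\
  Cdiv (Cmult (RtoC t) (f2e (RtoC t))) (f1e (RtoC t)) = RtoC (- (Nfun t / (1 - Sfun t))).
Proof.
  intros Ht HQ. pose proof (D_pos t Ht HQ) as HD.
  rewrite f1e_val, f2e_val; auto.
  split. intro E. apply RtoC_inj in E. lra.
  rewrite <- RtoC_div. f_equal. field. lra. lra.
Qed.

Lemma root_small al r : 0 <= al < 1 -> 0 < r < 1 -> hfun al r = 0 -> r < 1 / 10.
Proof.
  intros Ha Hr Hh. destruct (Rlt_le_dec r (1/10)) as [H|H]; auto.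
  exfalso.
  assert (H0 : hfun al (1/10) < 0) by (unfold hfun; simpl; nra).
  destruct (Req_dec r (1/10)) as [E|E]. subst r. lra.
  pose proof (hdec al (1/10) r Ha ltac:(lra) ltac:(lra)). lra.
Qed.

Lemma pick_t al r0 r : 0 <= al < 1 -> 0 < r0 < 1 -> hfun al r0 = 0 -> r0 < r ->
  exists t, r0 < t /\ t < r /\ t <= 12 / 100 /\ 0 < Qf t /\ hfun al t < 0.
Proof.
  intros Ha Hr0 Hh Hr.
  pose proof (root_small al r0 Ha Hr0 Hh).
  exists ((r0 + Rmin r (12/100)) / 2).
  pose proof (Rmin_l r (12/100)). pose proof (Rmin_r r (12/100)).
  assert (r0 < Rmin r (12/100)) by (apply Rmin_glb_lt; lra).
  split. lra. split. lra. split. lra. split.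
  apply Q_pos_small. lra.
  pose proof (hdec al r0 ((r0 + Rmin r (12/100)) / 2) Ha ltac:(lra) ltac:(lra)). lra.
Qed.

Lemma ext_bad al t : 0 <= al < 1 -> 0 <= t < 1 -> 0 < Qf t -> hfun al t < 0 ->
  1 - al < Nfun t / (1 - Sfun t).
Proof.
  intros Ha Ht HQ Hh. pose proof (D_pos t Ht HQ) as HD.
  pose proof (rel1 al t Ht) as R1.
  assert (Hp4 : 0 < (1 - t) ^ 4) by (apply pow_lt; lra).
  assert (H1 : 0 < (- hfun al t) / (1 - t) ^ 4) by (apply Rdiv_lt_0_compat; lra).
  assert (H2 : hfun al t / (1 - t) ^ 4 = - ((- hfun al t) / (1 - t) ^ 4)) by (field; lra).
  apply Rmult_lt_reg_r with (1 - Sfun t); auto.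
  replace (Nfun t / (1 - Sfun t) * (1 - Sfun t)) with (Nfun t) by (field; lra).
  lra.
Qed.

Lemma ext_fail al r0 r : 0 <= al < 1 -> 0 < r0 < 1 -> hfun al r0 = 0 -> r0 < r ->
  exists t, r0 < t /\ t < r /\ t < 1 /\
    f1e (RtoC t) <> RtoC 0 /\
    Cdiv (Cmult (RtoC t) (f2e (RtoC t))) (f1e (RtoC t)) = RtoC (- (Nfun t / (1 - Sfun t))) /\
    1 - al < Nfun t / (1 - Sfun t).
Proof.
  intros Ha Hr0 Hh Hr.
  destruct (pick_t al r0 r Ha Hr0 Hh Hr) as [t [H1 [H2 [H3 [H4 H5]]]]].
  assert (Ht : 0 <= t < 1) by lra.
  destruct (ext_w t Ht H4) as [E1 E2].
  exists t. repeat split; auto; try lra.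
  apply ext_bad; auto.
Qed.

Lemma h_nonneg al r0 t : 0 <= al < 1 -> r0 < 1 -> hfun al r0 = 0 -> 0 <= t <= r0 -> 0 <= hfun al t.
Proof.
  intros Ha Hr Hh Ht. destruct (Req_dec t r0) as [E|E]. subst; lra.
  pose proof (hdec al t r0 Ha ltac:(lra) ltac:(lra)). lra.
Qed.

Lemma h_pos al r0 t : 0 <= al < 1 -> r0 < 1 -> hfun al r0 = 0 -> 0 <= t < r0 -> 0 < hfun al t.
Proof.
  intros Ha Hr Hh Ht. pose proof (hdec al t r0 Ha ltac:(lra) ltac:(lra)). lra.
Qed.

Lemma div_le_of N D c : 0 < D -> N <= c * D -> N / D <= c.
Proof. intros HD H. apply Rmult_le_reg_r with D; auto. replace (N / D * D) with N by (field; lra). lra. Qed.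

Lemma div_lt_of N D c : 0 < D -> N < c * D -> N / D < c.
Proof. intros HD H. apply Rmult_lt_reg_r with D; auto. replace (N / D * D) with N by (field; lra). lra. Qed.

Lemma Re_1_plus w : Re (Cplus (RtoC 1) w) >= 1 - Cmod w.
Proof.
  rewrite re_plus, re_RtoC. pose proof (re_le_Cmod w). pose proof (Rle_abs (- Re w)).
  rewrite Rabs_Ropp in H0. lra.
Qed.

Lemma Re_1_plus_R x : Re (Cplus (RtoC 1) (RtoC x)) = 1 + x.
Proof. rewrite re_plus, !re_RtoC. reflexivity. Qed.

Lemma strict_bound al r0 f f1 f2 : 0 <= al < 1 -> 0 < r0 < 1 -> hfun al r0 = 0 ->
  inF f -> derivs f f1 f2 -> forall z, Cmod z < r0 ->
  f1 z <> RtoC 0 /\ Cmod (Cdiv (Cmult z (f2 z)) (f1 z)) < 1 - al.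
Proof.
  intros Ha Hr0 Hh Hf Hd z Hz.
  pose proof (Cmod_ge_0 z).
  assert (Hp : 0 < hfun al (Cmod z)) by (apply (h_pos al r0); auto; lra).
  destruct (pos_bound al f f1 f2 Ha Hf Hd z ltac:(lra) ltac:(lra)) as [H1 [H2 [H3 [H4 H5]]]].
  split; auto. eapply Rle_lt_trans. exact H2. apply div_lt_of; auto.
Qed.

Theorem corollary3p2 :
  (forall alpha : R, 0 <= alpha < 1 ->
     (exists! r0 : R, 0 < r0 < 1 /\ r0_eq alpha r0) /\
     (forall r0 : R, 0 < r0 < 1 -> r0_eq alpha r0 ->
        bound_on_closed_disk alpha r0 /\
        (forall r : R, r0 < r -> ~ bound_on_closed_disk alpha r) /\
        radius_convexity_order alpha r0)) /\
  (forall r0 : R, 0 < r0 < 1 -> r0_eq (1/2) r0 ->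
     radius_uniform_convexity r0 /\ 647225 / 10000000 <= r0 < 647235 / 10000000).
Proof.
  split.
  - intros al Ha. split.
    + assert (Hc : continuity (fun t => - hfun al t)) by (unfold hfun; reg).
      destruct (IVT _ 0 1 Hc ltac:(lra) ltac:(unfold hfun; simpl; lra) ltac:(unfold hfun; simpl; lra)) as [z [Hz1 Hz2]].
      assert (Hz : hfun al z = 0) by lra.
      assert (z <> 0) by (intro E; subst; unfold hfun in Hz; simpl in Hz; lra).
      assert (z <> 1) by (intro E; subst; unfold hfun in Hz; simpl in Hz; lra).
      exists z. split. split. lra. apply heq; auto.
      intros y [Hy Hy2]. apply heq in Hy2.
      destruct (Rtotal_order z y) as [L|[L|L]]; auto.
      * pose proof (hdec al z y Ha ltac:(lra) ltac:(lra)). lra.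
      * pose proof (hdec al y z Ha ltac:(lra) ltac:(lra)). lra.
    + intros r0 Hr0 Heq. apply heq in Heq. split; [|split].
      * intros f f1 f2 Hf Hd z Hz Hzr.
        pose proof (Cmod_ge_0 z).
        assert (Hh : 0 <= hfun al (Cmod z)) by (apply (h_nonneg al r0); auto; lra).
        destruct (pos_bound al f f1 f2 Ha Hf Hd z Hz Hh) as [H1 [H2 [H3 [H4 H5]]]].
        split; auto. eapply Rle_trans. exact H2. apply div_le_of; auto.
      * intros r Hr Hb.
        destruct (ext_fail al r0 r Ha Hr0 Heq Hr) as [t [T1 [T2 [T3 [T4 [T5 T6]]]]]].
        assert (Ht : Cmod (RtoC t) = t) by (rewrite Cmod_R, Rabs_pos_eq; lra).
        destruct (Hb fext f1e f2e ext_inF ext_derivs (RtoC t) ltac:(lra) ltac:(lra)) as [_ B].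
        rewrite T5, Cmod_R, Rabs_Ropp in B.
        pose proof (Rle_abs (Nfun t / (1 - Sfun t))). lra.
      * split.
        -- intros r [Hr Hc]. destruct (Rle_lt_dec r r0) as [L|L]; auto. exfalso.
           destruct (ext_fail al r0 r Ha Hr0 Heq L) as [t [T1 [T2 [T3 [T4 [T5 T6]]]]]].
           assert (Ht : Cmod (RtoC t) = t) by (rewrite Cmod_R, Rabs_pos_eq; lra).
           destruct (Hc fext f1e f2e ext_inF ext_derivs (RtoC t) ltac:(lra)) as [_ B].
           rewrite T5, Re_1_plus_R in B. lra.
        -- intros b Hb. apply Hb. split. lra.
           intros f f1 f2 Hf Hd z Hz.
           destruct (strict_bound al r0 f f1 f2 Ha Hr0 Heq Hf Hd z Hz) as [H1 H2].
           split; auto. pose proof (Re_1_plus (Cdiv (Cmult z (f2 z)) (f1 z))). lra.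
  - intros r0 Hr0 Heq. apply heq in Heq.
    assert (Ha : 0 <= 1/2 < 1) by lra.
    split.
    + split.
      * intros r [Hr Hc]. destruct (Rle_lt_dec r r0) as [L|L]; auto. exfalso.
        destruct (ext_fail (1/2) r0 r Ha Hr0 Heq L) as [t [T1 [T2 [T3 [T4 [T5 T6]]]]]].
        assert (Ht : Cmod (RtoC t) = t) by (rewrite Cmod_R, Rabs_pos_eq; lra).
        destruct (Hc fext f1e f2e ext_inF ext_derivs (RtoC t) ltac:(lra)) as [_ B].
        rewrite T5, Re_1_plus_R, Cmod_R, Rabs_Ropp, Rabs_pos_eq in B; lra.
      * intros b Hb. apply Hb. split. lra.
        intros f f1 f2 Hf Hd z Hz.
        destruct (strict_bound (1/2) r0 f f1 f2 Ha Hr0 Heq Hf Hd z Hz) as [H1 H2].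
        split; auto. pose proof (Re_1_plus (Cdiv (Cmult z (f2 z)) (f1 z))). lra.
    + assert (HA : 0 < hfun (1/2) (647225 / 10000000)) by (unfold hfun; simpl; lra).
      assert (HB : hfun (1/2) (647235 / 10000000) < 0) by (unfold hfun; simpl; lra).
      split.
      * destruct (Rle_lt_dec (647225 / 10000000) r0) as [L|L]; auto.
        pose proof (hdec (1/2) r0 (647225 / 10000000) Ha ltac:(lra) ltac:(lra)). lra.
      * destruct (Rlt_le_dec r0 (647235 / 10000000)) as [L|L]; auto.
        destruct (Req_dec r0 (647235 / 10000000)) as [E|E]. rewrite E in Heq. lra.
        pose proof (hdec (1/2) (647235 / 10000000) r0 Ha ltac:(lra) ltac:(lra)). lra.
Qed.
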